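(* Consider a series system (so $\phi(s)=1$ if and only if $s_k=1$ for all $k$), with an arbitrary joint prior distribution of the component states and with inspection error rates $\epsilon_{FA},\epsilon_{FS}\in[0,1/2)$ identical for all components. For any two components $c_i,c_j$ with $p_i\ge p_j$, we have $I_i\supseteq I_j$, i.e. $p_{\omega|y_i=1}\le p_{\omega|y_j=1}\le p_{\omega|y_j=0}\le p_{\omega|y_i=0}$, and consequently $\mathrm{VoI}_G(i)\ge\mathrm{VoI}_G(j)$ for every concave function $l^*$. In particular, the most vulnerable component (the one with the highest marginal failure probability) has the highest $\mathrm{VoI}_G$, regardless of $l^*$.
   Context: A system consists of $N$ binary components $c_1,\dots,c_N$ with random joint state $s=(s_1,\dots,s_N)\in\{0,1\}^N$ ($s_k=1$: working; $s_k=0$: failed), with arbitrary prior distribution $p_s$. The system state is $u=\phi(s)$ ($u=0$: system failure), $p_\pi=\mathbb{P}[u=0]$, and $p_k=\mathbb{P}[s_k=0]$ is the marginal failure probability of $c_k$. Inspecting $c_k$ yields a binary observation $y_k$ (alarm $y_k=0$, silence $y_k=1$) which, given $s$, depends only on $s_k$, with $\mathbb{P}[y_k=1\mid s_k=0]=\epsilon_{FS}$ and $\mathbb{P}[y_k=0\mid s_k=1]=\epsilon_{FA}$. Then $h_k=\mathbb{P}[y_k=0]=\epsilon_{FA}+(1-\epsilon_{FA}-\epsilon_{FS})p_k$; posterior system failure probabilities are $p_{\omega|y_k=b}=\mathbb{P}[u=0\mid y_k=b]$ (defined when the conditioning event has positive probability), and $I_k=[p_{\omega|y_k=1},p_{\omega|y_k=0}]$.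 Global metric: for a concave $l^*:[0,1]\to\mathbb{R}$, $L^G_\pi=l^*(p_\pi)$, $L^G_\omega(k)=h_k\,l^*(p_{\omega|y_k=0})+(1-h_k)\,l^*(p_{\omega|y_k=1})$ (a term with zero probability is omitted), and $\mathrm{VoI}_G(k)=L^G_\pi-L^G_\omega(k)$. *)

(* Defs.v *)
From mathcomp Require Import all_boot all_order all_algebra.
Set Implicit Arguments. Unset Strict Implicit. Unset Printing Implicit Defensive.
Import Order.TTheory GRing.Theory Num.Theory.
Local Open Scope ring_scope.

(* Joint component state s = (s_1..s_N) : true = working (s_k = 1),
   false = failed (s_k = 0). *)
Definition cstate (N : nat) := {ffun 'I_N -> bool}.

Definition is_pmf (R : realFieldType) (N : nat) (P : {ffun cstate N -> R}) :=
  (forall s, 0 <= P s) /\ \sum_(s : cstate N) P s = 1.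

Definition series_phi (N : nat) (s : cstate N) : bool := [forall k, s k].

Definition pk (R : realFieldType) N (P : {ffun cstate N -> R}) (k : 'I_N) : R :=
  \sum_(s : cstate N | ~~ s k) P s.

Definition p_pi (R : realFieldType) N (phi : cstate N -> bool)
  (P : {ffun cstate N -> R}) : R := \sum_(s | ~~ phi s) P s.

(* likelihood P[y_k = b | s_k = sk]; b = false : alarm (y=0), true : silence (y=1) *)
Definition lik (R : realFieldType) (eFA eFS : R) (sk b : bool) : R :=
  if sk then (if b then 1 - eFA else eFA) else (if b then eFS else 1 - eFS).

Definition py (R : realFieldType) N (eFA eFS : R) (P : {ffun cstate N -> R})
  (k : 'I_N) (b : bool) : R := \sum_(s : cstate N) P s * lik eFA eFS (s k) b.

Definition hk (R : realFieldType) N (eFA eFS : R) (P : {ffun cstate N -> R})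
  (k : 'I_N) : R := py eFA eFS P k false.

Definition post (R : realFieldType) N (phi : cstate N -> bool) (eFA eFS : R)
  (P : {ffun cstate N -> R}) (k : 'I_N) (b : bool) : R :=
  (\sum_(s | ~~ phi s) P s * lik eFA eFS (s k) b) / py eFA eFS P k b.

Definition concave01 (R : realFieldType) (l : R -> R) :=
  forall x y t : R, 0 <= x <= 1 -> 0 <= y <= 1 -> 0 <= t <= 1 ->
    t * l x + (1 - t) * l y <= l (t * x + (1 - t) * y).

(* L^G_omega(k) = h_k l*(p_{w|y_k=0}) + (1-h_k) l*(p_{w|y_k=1}); a term with
   zero probability vanishes since it is multiplied by 0. *)
Definition LG_omega (R : realFieldType) N (phi : cstate N -> bool) (eFA eFS : R)
  (P : {ffun cstate N -> R}) (l : R -> R) (k : 'I_N) : R :=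
  hk eFA eFS P k * l (post phi eFA eFS P k false)
  + (1 - hk eFA eFS P k) * l (post phi eFA eFS P k true).

Definition VoI_G (R : realFieldType) N (phi : cstate N -> bool) (eFA eFS : R)
  (P : {ffun cstate N -> R}) (l : R -> R) (k : 'I_N) : R :=
  l (p_pi phi P) - LG_omega phi eFA eFS P l k.

(* Main.v *)
Require Import Defs.
From mathcomp Require Import all_boot all_order all_algebra.
From mathcomp Require Import ring lra.
Import Order.TTheory GRing.Theory Num.Theory.
Local Open Scope ring_scope.
Set Implicit Arguments. Unset Strict Implicit.

Lemma div01 (R : realFieldType) (a b : R) : 0 <= a -> a <= b -> 0 <= a / b <= 1.
Proof.
move=> a0 ab; have [->|b0] := eqVneq b 0; first by rewrite invr0 mulr0 lexx ler01.
have bp : 0 < b by rewrite lt_def b0; exact: le_trans ab.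
by rewrite divr_ge0 ?(le_trans a0) //= ler_pdivrMr // mul1r.
Qed.

Lemma muldiv (R : realFieldType) (a b : R) : 0 <= a -> a <= b -> b * (a / b) = a.
Proof.
move=> a0 ab; have [b0|b0] := eqVneq b 0.
  have a00 : a = 0 by apply/eqP; rewrite eq_le a0 andbT; rewrite b0 in ab.
  by rewrite a00 mul0r mulr0.
by rewrite mulrC divfK.
Qed.

Lemma G1 (R : realFieldType) (hi hj c : R) : 0 < hj -> hj <= hi -> 0 <= c ->
  (hj - c) / hj <= (hi - c) / hi.
Proof.
move=> hj0 hji c0; have hi0 : 0 < hi by exact: lt_le_trans hji.
rewrite -subr_ge0.
have -> : (hi - c) / hi - (hj - c) / hj = c * (hi - hj) / (hi * hj).
  by field; apply/andP; split; rewrite gt_eqF.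
by apply: divr_ge0; [apply: mulr_ge0; lra | apply: mulr_ge0; lra].
Qed.

Lemma G3 (R : realFieldType) (h q e : R) : 0 < h < 1 -> 0 <= q -> e <= h ->
  ((1 - h) - q * (1 - e)) / (1 - h) <= (h - q * e) / h.
Proof.
case/andP=> h0 h1 q0 eh; rewrite -subr_ge0.
have -> : (h - q * e) / h - ((1 - h) - q * (1 - e)) / (1 - h) = q * (h - e) / (h * (1 - h)).
  by field; apply/andP; split; rewrite gt_eqF //; lra.
by apply: divr_ge0; apply: mulr_ge0; lra.
Qed.

Lemma chord (R : realFieldType) (l : R -> R) (h1 h2 a1 b1 a2 b2 : R) :
  concave01 l -> 0 <= h1 <= 1 -> 0 <= h2 <= 1 ->
  0 <= b1 -> a1 <= 1 ->
  b1 <= a2 <= a1 -> b1 <= b2 <= a1 ->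
  h1 * a1 + (1 - h1) * b1 = h2 * a2 + (1 - h2) * b2 ->
  h1 * l a1 + (1 - h1) * l b1 <= h2 * l a2 + (1 - h2) * l b2.
Proof.
move=> cl /andP[h10 h11] /andP[h20 h21] b10 a11 /andP[ba2 a2a] /andP[bb2 b2a] mean.
have [e|ne] := eqVneq a1 b1.
  have ea2 : a2 = a1 by apply/eqP; rewrite eq_le a2a e ba2.
  have eb2 : b2 = a1 by apply/eqP; rewrite eq_le b2a e bb2.
  rewrite ea2 eb2 -e; lra.
have d0 : 0 < a1 - b1 by rewrite lt_def subr_eq0 ne /= subr_ge0 (le_trans ba2).
have key : forall x, b1 <= x <= a1 ->
   (x - b1) / (a1 - b1) * l a1 + (1 - (x - b1) / (a1 - b1)) * l b1 <= l x.
  move=> x /andP[bx xa].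
  have t01 : 0 <= (x - b1) / (a1 - b1) <= 1 by apply: div01; lra.
  have := cl a1 b1 ((x - b1) / (a1 - b1)) ltac:(apply/andP; split; lra)
     ltac:(apply/andP; split; lra) t01.
  suff -> : (x - b1) / (a1 - b1) * a1 + (1 - (x - b1) / (a1 - b1)) * b1 = x by [].
  by field; rewrite gt_eqF.
have k2 := key a2 ltac:(apply/andP; split; lra).
have k3 := key b2 ltac:(apply/andP; split; lra).
set t2 := (a2 - b1) / (a1 - b1) in k2.
set t3 := (b2 - b1) / (a1 - b1) in k3.
have hT : h1 = h2 * t2 + (1 - h2) * t3.
  rewrite /t2 /t3.
  apply: (@mulIf _ (a1 - b1)); first by rewrite gt_eqF.
  rewrite mulrDl -!mulrA !(mulrA _ _^-1) !divfK ?gt_eqF //; lra.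
have : h2 * (t2 * l a1 + (1 - t2) * l b1) + (1 - h2) * (t3 * l a1 + (1 - t3) * l b1)
   <= h2 * l a2 + (1 - h2) * l b2.
  by apply: lerD; apply: ler_wpM2l => //; lra.
suff -> : h2 * (t2 * l a1 + (1 - t2) * l b1) + (1 - h2) * (t3 * l a1 + (1 - t3) * l b1)
  = h1 * l a1 + (1 - h1) * l b1 by [].
rewrite hT; ring.
Qed.

Definition qq (R : realFieldType) N (P : {ffun cstate N -> R}) : R :=
  \sum_(s | series_phi s) P s.

Lemma lik_sum (R : realFieldType) (e f : R) sk : lik e f sk true + lik e f sk false = 1.
Proof. by case: sk => /=; ring. Qed.

Lemma lik_ge0 (R : realFieldType) (e f : R) sk b : 0 <= e <= 1 -> 0 <= f <= 1 -> 0 <= lik e f sk b.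
Proof. by move=> /andP[? ?] /andP[? ?]; case: sk; case: b => /=; lra. Qed.

Lemma py_true (R : realFieldType) N (P : {ffun cstate N -> R}) e f k :
  is_pmf P -> py e f P k true = 1 - hk e f P k.
Proof.
case=> _ s1; rewrite /hk; apply/eqP; rewrite eq_sym subr_eq eq_sym /py -big_split /= -s1.
by apply/eqP; apply: eq_bigr => s _; rewrite -mulrDr lik_sum mulr1.
Qed.

Lemma pk_le1 (R : realFieldType) N (P : {ffun cstate N -> R}) k :
  is_pmf P -> 0 <= pk P k <= 1.
Proof.
case=> p0 s1; rewrite /pk sumr_ge0 //= -s1 [X in _ <= X](bigID (fun s : cstate N => ~~ s k)) /=.
by rewrite lerDl sumr_ge0.
Qed.

Lemma hk_eq (R : realFieldType) N (P : {ffun cstate N -> R}) e f k :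
  is_pmf P -> hk e f P k = e + (1 - e - f) * pk P k.
Proof.
case=> p0 s1; rewrite /hk /py (bigID (fun s : cstate N => s k)) /=.
have A : \sum_(s : cstate N | s k) P s = 1 - pk P k.
  by have := s1; rewrite (bigID (fun s : cstate N => s k)) /= /pk => h; lra.
rewrite (eq_bigr (fun s => P s * e)); last by move=> s ->.
rewrite [X in _ + X](eq_bigr (fun s => P s * (1 - f))); last by move=> s /negbTE ->.
rewrite -!mulr_suml A /pk; ring.
Qed.

Lemma num_eq (R : realFieldType) N (P : {ffun cstate N -> R}) e f k b :
  \sum_(s | ~~ series_phi s) P s * lik e f (s k) b = py e f P k b - qq P * lik e f true b.
Proof.
rewrite /py [in RHS](bigID (@series_phi N)) /=.
have -> : \sum_(s | series_phi s) P s * lik e f (s k) b = qq P * lik e f true b.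
  by rewrite /qq mulr_suml; apply: eq_bigr => s /forallP /(_ k) ->.
by case: b => /=; ring.
Qed.

Lemma ppi_eq (R : realFieldType) N (P : {ffun cstate N -> R}) :
  is_pmf P -> p_pi (@series_phi N) P = 1 - qq P.
Proof. by case=> _ s1; move: s1; rewrite /p_pi /qq (bigID (@series_phi N)) /= => s1; lra. Qed.

Lemma qq_ge0 (R : realFieldType) N (P : {ffun cstate N -> R}) : is_pmf P -> 0 <= qq P.
Proof. by case=> p0 _; rewrite sumr_ge0. Qed.

Lemma facts (R : realFieldType) N (P : {ffun cstate N -> R}) e f k :
  is_pmf P -> 0 <= e < 1 / 2 -> 0 <= f < 1 / 2 ->
  let h := hk e f P k in
  let x0 := post (@series_phi N) e f P k false in
  let x1 := post (@series_phi N) e f P k true in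
  [/\ h = e + (1 - e - f) * pk P k, 0 <= h <= 1 /\ e <= h,
      x0 = (h - qq P * e) / h /\ x1 = ((1 - h) - qq P * (1 - e)) / (1 - h),
      0 <= x0 <= 1 /\ 0 <= x1 <= 1 &
      h * x0 + (1 - h) * x1 = p_pi (@series_phi N) P].
Proof.
move=> pm /andP[e0 e1] /andP[f0 f1] h x0 x1.
have hE : h = e + (1 - e - f) * pk P k by rewrite /h hk_eq.
have := pk_le1 k pm => /andP[pk0 pk1].
have q0 := qq_ge0 pm.
have a0 : 0 <= 1 - e - f by lra.
have hp : 0 <= (1 - e - f) * pk P k by apply: mulr_ge0.
have hp1 : (1 - e - f) * pk P k <= 1 - e - f by rewrite -[X in _ <= X]mulr1 ler_wpM2l.
have lg b s : 0 <= P s * lik e f (s k) b.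
  by apply: mulr_ge0; [case: pm | apply: lik_ge0; lra].
have n0 b : 0 <= \sum_(s | ~~ series_phi s) P s * lik e f (s k) b by apply: sumr_ge0.
have n0f := n0 false; have n1f := n0 true.
rewrite num_eq in n0f; rewrite num_eq py_true // in n1f.
rewrite -/(hk e f P k) -/h /= in n0f n1f.
have x0E : x0 = (h - qq P * e) / h by rewrite /x0 /post num_eq.
have x1E : x1 = ((1 - h) - qq P * (1 - e)) / (1 - h) by rewrite /x1 /post num_eq py_true.
have qe0 : 0 <= qq P * e by apply: mulr_ge0.
have qe1 : 0 <= qq P * (1 - e) by apply: mulr_ge0; lra.
split => //; first by split; [apply/andP; split|]; lra.
  by split; [rewrite x0E; apply: div01; lra | rewrite x1E; apply: div01; lra].
rewrite x0E x1E !muldiv ?ppi_eq //; lra.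
Qed.

Lemma post_cmp (R : realFieldType) N (P : {ffun cstate N -> R}) e f i j :
  is_pmf P -> 0 <= e < 1 / 2 -> 0 <= f < 1 / 2 -> pk P j <= pk P i ->
  (0 < hk e f P i < 1) -> (0 < hk e f P j < 1) ->
        post (@series_phi N) e f P i true <= post (@series_phi N) e f P j true
        /\ post (@series_phi N) e f P j true <= post (@series_phi N) e f P j false
        /\ post (@series_phi N) e f P j false <= post (@series_phi N) e f P i false.
Proof.
move=> pm he hf pji /andP[hi0 hi1] /andP[hj0 hj1].
have [hiE [hi01 ehi] [x0iE x1iE] _ _] := facts i pm he hf.
have [hjE [hj01 ehj] [x0jE x1jE] _ _] := facts j pm he hf.
have q0 := qq_ge0 pm.
move: he hf => /andP[e0 e1] /andP[f0 f1].
have hji : hk e f P j <= hk e f P i.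
  by rewrite hiE hjE lerD2l ler_wpM2l //; lra.
rewrite x0iE x1iE x0jE x1jE; split; last split.
- by apply: G1; [lra|lra|apply: mulr_ge0; lra].
- by apply: G3 => //; apply/andP.
- by apply: G1 => //; apply: mulr_ge0.
Qed.

Lemma voi_cmp (R : realFieldType) N (P : {ffun cstate N -> R}) e f i j :
  is_pmf P -> 0 <= e < 1 / 2 -> 0 <= f < 1 / 2 -> pk P j <= pk P i ->
  forall l : R -> R, concave01 l ->
    VoI_G (@series_phi N) e f P l j <= VoI_G (@series_phi N) e f P l i.
Proof.
move=> pm he hf pji l cl.
have [hiE [hi01 ehi] [x0iE x1iE] [x0i01 x1i01] mi] := facts i pm he hf.
have [hjE [hj01 ehj] [x0jE x1jE] [x0j01 x1j01] mj] := facts j pm he hf.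
have q0 := qq_ge0 pm.
move: (he) (hf) => /andP[e0 e1] /andP[f0 f1].
have hji : hk e f P j <= hk e f P i.
  by rewrite hiE hjE lerD2l ler_wpM2l //; lra.
rewrite /VoI_G /LG_omega.
set hi := hk e f P i in hiE hi01 ehi x0iE x1iE mi hji *.
set hj := hk e f P j in hjE hj01 ehj x0jE x1jE mj hji *.
set x0i := post _ e f P i false in x0iE x0i01 mi *.
set x1i := post _ e f P i true in x1iE x1i01 mi *.
set x0j := post _ e f P j false in x0jE x0j01 mj *.
set x1j := post _ e f P j true in x1jE x1j01 mj *.
set pp := p_pi _ P in mi mj *.
have Li : hi * l x0i + (1 - hi) * l x1i <= l pp.
  by rewrite -mi; apply: cl.
have [hj0|hj0] := eqVneq hj 0.
  rewrite hj0 in mj *; have -> : x1j = pp by rewrite -mj; ring.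
  lra.
have [hj1|hj1] := eqVneq hj 1.
  rewrite hj1 in mj *; have -> : x0j = pp by rewrite -mj; ring.
  lra.
have hjp : 0 < hj < 1.
  by move: hj01 => /andP[a b]; rewrite !lt_def hj0 a eq_sym hj1 /=; lra.
have c1 : x1j <= x0j by rewrite x0jE x1jE; apply: G3.
have c2 : x0j <= x0i by rewrite x0jE x0iE; apply: G1 => //; [lra | apply: mulr_ge0].
have c3 : x1i <= x1j.
  have [hi1|hi1] := eqVneq hi 1.
    by rewrite x1iE hi1 subrr invr0 mulr0; case/andP: x1j01.
  rewrite x1iE x1jE; apply: G1; [ | lra | apply: mulr_ge0; lra].
  by move: hi01 => /andP[a b]; rewrite subr_gt0 lt_def eq_sym hi1 b.
suff : hi * l x0i + (1 - hi) * l x1i <= hj * l x0j + (1 - hj) * l x1j by lra.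
apply: chord => //; first by case/andP: x1i01.
- by case/andP: x0i01.
- by apply/andP; split; lra.
- by apply/andP; split; lra.
by rewrite mi mj.
Qed.

Theorem mainTheorem3 (R : realFieldType) (N : nat) (P : {ffun cstate N -> R})
  (eFA eFS : R) :
  is_pmf P ->
  0 <= eFA < 1 / 2 -> 0 <= eFS < 1 / 2 ->
  (forall i j : 'I_N, pk P j <= pk P i ->
     ((0 < hk eFA eFS P i < 1) -> (0 < hk eFA eFS P j < 1) ->
        post (@series_phi N) eFA eFS P i true <= post (@series_phi N) eFA eFS P j true
        /\ post (@series_phi N) eFA eFS P j true <= post (@series_phi N) eFA eFS P j false
        /\ post (@series_phi N) eFA eFS P j false <= post (@series_phi N) eFA eFS P i false)
     /\ (forall l : R -> R, concave01 l ->
           VoI_G (@series_phi N) eFA eFS P l j <= VoI_G (@series_phi N) eFA eFS P l i))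
  /\ (forall i : 'I_N, (forall k : 'I_N, pk P k <= pk P i) ->
        forall l : R -> R, concave01 l ->
        forall k : 'I_N, VoI_G (@series_phi N) eFA eFS P l k <= VoI_G (@series_phi N) eFA eFS P l i).
Proof.
move=> pm he hf; split.
  move=> i j pji; split; first exact: post_cmp.
  exact: voi_cmp.
by move=> i hmax l cl k; apply: voi_cmp.
Qed.
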